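(* For every integer $n\ge 53$, $5^n$ is selfcondensable.
   Context: For a finite nonempty multiset $S$ of real numbers, $V(S)$ is the smallest set of real numbers such that: (1) if $|S|=1$ then $S\subseteq V(S)$; (2) if $|S|\ge 2$, then for all nonempty multisets $A,B$ with $A+B=S$ (multiplicities add) and all $a\in V(A)$, $b\in V(B)$, each of $a+b,\ a-b,\ b-a,\ ab,\ a/b,\ b/a,\ a^b,\ b^a$ lies in $V(S)$ whenever it is a well-defined real number; (3) if $a\in V(S)$ is a nonnegative integer then $a!\in V(S)$ (with $0!=1$). A positive integer $N$ is selfcondensable if $N\in V(S_N)$, where $S_N$ is the multiset of the digits of the decimal representation of $N$ (each digit counted with its multiplicity). *)

(* Defs.v *)
From Stdlib Require Import Reals Lra Lia ZArith Arith List Permutation.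
Import ListNotations.
Open Scope R_scope.

Definition rpow_rel (a b r : R) : Prop :=
  (0 < a /\ r = Rpower a b) \/
  (a = 0 /\ 0 < b /\ r = 0) \/
  (a < 0 /\ exists z : Z, b = IZR z /\ r = powerRZ a z).

Definition combine (a b r : R) : Prop :=
  r = a + b \/ r = a - b \/ r = b - a \/ r = a * b \/
  (b <> 0 /\ r = a / b) \/ (a <> 0 /\ r = b / a) \/
  rpow_rel a b r \/ rpow_rel b a r.

(* V S r : r ∈ V(S); multisets are lists up to permutation. *)
Inductive V : list R -> R -> Prop :=
| V_single : forall x, V [x] x
| V_op : forall (S A B : list R) (a b r : R),
    Permutation S (A ++ B) -> A <> [] -> B <> [] ->
    V A a -> V B b -> combine a b r -> V S r
| V_fact : forall (S : list R) (k : nat), V S (INR k) -> V S (INR (fact k)).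

(* decimal digits (least significant first) *)
Fixpoint digits_aux (fuel n : nat) : list nat :=
  match fuel with
  | O => []
  | S f => if Nat.ltb n 10 then [n] else (n mod 10)%nat :: digits_aux f (n / 10)
  end.

Definition digits (n : nat) : list nat := digits_aux n n.

Definition selfcondensable (N : nat) : Prop :=
  (0 < N)%nat /\ V (map INR (digits N)) (INR N).

(* Main.v *)
Require Import Defs.
From Stdlib Require Import Reals Arith List Permutation.
From Stdlib Require Import Lra Lia ZArith.
Import ListNotations.
Open Scope R_scope.

Lemma V_nonempty : forall L r, V L r -> L <> [].
Proof.
  intros L r H; induction H; try discriminate; auto.
  intro E; subst. apply Permutation_nil in H. destruct A; [congruence|discriminate].
Qed.

Lemma V_perm : forall L r, V L r -> forall L', Permutation L L' -> V L' r.
Proof.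
  intros L r H; induction H; intros L' HP.
  - apply Permutation_length_1_inv in HP; subst; constructor.
  - apply (V_op L' A B a b r); auto.
    eapply perm_trans; [apply Permutation_sym; eassumption | eassumption].
  - apply V_fact; auto.
Qed.

Lemma V_bin : forall A B a b r, V A a -> V B b -> Defs.combine a b r -> V (A ++ B) r.
Proof.
  intros. eapply V_op; eauto using V_nonempty.
Qed.

Lemma V_add : forall A B a b, V A a -> V B b -> V (A ++ B) (a + b).
Proof. intros; eapply V_bin; eauto; left; reflexivity. Qed.

Lemma V_mul : forall A B a b, V A a -> V B b -> V (A ++ B) (a * b).
Proof. intros; eapply V_bin; eauto; unfold Defs.combine; tauto. Qed.

Lemma V_any : forall L, L <> [] -> exists x, V L x.
Proof.
  induction L as [|a L IH]; intros H; [congruence|].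
  destruct L as [|b L].
  - exists a; constructor.
  - destruct IH as [x Hx]; [discriminate|].
    exists (a + x). apply (V_add [a] (b::L)); auto; constructor.
Qed.

Lemma Rpower_1_l : forall x, Rpower 1 x = 1.
Proof. intros; unfold Rpower; rewrite ln_1, Rmult_0_r, exp_0; reflexivity. Qed.

Lemma V_absorb : forall B L, V B 1 -> V (B ++ L) 1.
Proof.
  intros B L HB. destruct L as [|a L]; [rewrite app_nil_r; auto|].
  destruct (V_any (a::L)) as [x Hx]; [discriminate|].
  eapply V_bin; eauto. unfold Defs.combine. right; right; right; right; right; right; left.
  left. split; [lra|]. rewrite Rpower_1_l; reflexivity.
Qed.

Lemma V_ones : forall Bs, Bs <> [] -> Forall (fun B => V B 1) Bs -> V (concat Bs) 1.
Proof.
  induction Bs as [|B Bs IH]; intros Hne HF; [congruence|].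
  inversion HF; subst. simpl. destruct Bs as [|B' Bs].
  - simpl; rewrite app_nil_r; auto.
  - replace 1 with (1*1) by ring. apply V_mul; auto. apply IH; auto; discriminate.
Qed.
Import ListNotations.
Open Scope R_scope.

Fixpoint fb (fuel n : nat) : nat :=
  match fuel with
  | O => O
  | S fu => if Nat.leb n 3 then n else (fb fu (n / 2) + 2 + n mod 2)%nat
  end.

Lemma mod2_cases : forall n, (n mod 2 = 0 \/ n mod 2 = 1)%nat.
Proof. intros. pose proof (Nat.mod_upper_bound n 2 ltac:(lia)). lia. Qed.

Lemma div2_lt : forall n, (4 <= n)%nat -> (n / 2 < n)%nat /\ (1 <= n/2)%nat.
Proof. intros. pose proof (Nat.div_mod n 2 ltac:(lia)). pose proof (Nat.mod_upper_bound n 2 ltac:(lia)). lia. Qed.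

Lemma INR_split : forall n, INR n = 2 * INR (n / 2) + INR (n mod 2).
Proof.
  intros. rewrite (Nat.div_mod n 2) at 1 by lia. rewrite plus_INR, mult_INR. simpl. ring.
Qed.

Ltac fsplit := repeat match goal with H: Forall _ (_::_) |- _ => apply Forall_cons_iff in H; destruct H end.

Lemma ones_exact : forall fuel n Bs, (1 <= n <= fuel)%nat ->
  Forall (fun B => V B 1) Bs -> length Bs = fb fuel n -> V (concat Bs) (INR n).
Proof.
  induction fuel as [|fu IH]; intros n Bs Hn HF HL; [lia|].
  change (fb (S fu) n) with (if Nat.leb n 3 then n else (fb fu (n/2) + 2 + n mod 2)%nat) in HL.
  destruct (Nat.leb_spec n 3).
  - assert (n = 1 \/ n = 2 \/ n = 3)%nat as [E|[E|E]] by lia; rewrite E in HL |- *.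
    + destruct Bs as [|B [|]]; cbn [length] in HL; try lia. fsplit.
      simpl. rewrite app_nil_r. auto.
    + destruct Bs as [|B1 [|B2 [|]]]; cbn [length] in HL; try lia. fsplit. simpl. rewrite app_nil_r. replace (INR 2) with (1+1) by (simpl; ring).
      apply V_add; auto.
    + destruct Bs as [|B1 [|B2 [|B3 [|]]]]; cbn [length] in HL; try lia. fsplit. simpl. rewrite app_nil_r.
      replace (1+1+1) with (1+(1+1)) by ring.
      apply V_add; auto. apply V_add; auto.
  - destruct (div2_lt n) as [Hlt Hge]; [lia|].
    destruct Bs as [|B1 [|B2 rest]]; cbn [length] in HL; try lia.
    fsplit.
    assert (H12 : V (B1 ++ B2) 2) by (replace 2 with (1+1) by ring; apply V_add; auto).
    rewrite INR_split.
    destruct (mod2_cases n) as [E|E]; rewrite E in *.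
    + assert (Hm : V (concat rest) (INR (n/2))) by (apply IH; auto; lia).
      simpl. rewrite Rplus_0_r. rewrite app_assoc. apply V_mul; auto.
    + destruct rest as [|B3 rest]; cbn [length] in HL; try lia.
      fsplit.
      assert (Hm : V (concat rest) (INR (n/2))) by (apply IH; auto; lia).
      apply V_perm with (L := ((B1 ++ B2) ++ concat rest) ++ B3).
      * simpl. apply V_add; auto. apply V_mul; auto.
      * simpl. rewrite <- !app_assoc. apply Permutation_app_head. apply Permutation_app_head.
        apply Permutation_app_comm.
Qed.

Lemma ones_ge : forall n Bs, (1 <= n)%nat ->
  Forall (fun B => V B 1) Bs -> (fb n n <= length Bs)%nat -> V (concat Bs) (INR n).
Proof.
  intros n Bs Hn HF HL.
  rewrite <- (firstn_skipn (fb n n) Bs). rewrite concat_app.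
  assert (H1 : V (concat (firstn (fb n n) Bs)) (INR n)).
  { apply (ones_exact n); [lia| |].
    - rewrite <- (firstn_skipn (fb n n) Bs) in HF. apply Forall_app in HF; tauto.
    - rewrite firstn_length. lia. }
  destruct (skipn (fb n n) Bs) as [|C Cs] eqn:E.
  - simpl. rewrite app_nil_r. auto.
  - replace (INR n) with (INR n * 1) by ring. apply V_mul; auto.
    apply V_ones; [discriminate|]. rewrite <- E.
    rewrite <- (firstn_skipn (fb n n) Bs) in HF. apply Forall_app in HF; tauto.
Qed.
Import ListNotations.
Open Scope nat_scope.

Lemma pow_pos10 : forall j, 0 < 10 ^ j.
Proof. intros. pose proof (Nat.pow_nonzero 10 j ltac:(lia)). lia. Qed.

Lemma dig_len : forall fuel n j, n <= fuel -> 10 ^ j <= n -> j + 1 <= length (digits_aux fuel n).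
Proof.
  induction fuel as [|fu IH]; intros n j Hn Hj.
  - pose proof (pow_pos10 j). lia.
  - change (digits_aux (S fu) n) with (if Nat.ltb n 10 then [n] else (n mod 10) :: digits_aux fu (n / 10)).
    destruct (Nat.ltb_spec n 10).
    + destruct j; simpl; [lia|]. rewrite Nat.pow_succ_r' in Hj. pose proof (pow_pos10 j). lia.
    + cbn [length]. destruct j; [lia|].
      assert (10 ^ j <= n / 10).
      { apply Nat.div_le_lower_bound; [lia|]. rewrite Nat.pow_succ_r' in Hj. lia. }
      pose proof (Nat.div_lt n 10 ltac:(lia) ltac:(lia)).
      specialize (IH (n/10) j ltac:(lia) H0). lia.
Qed.

Lemma dig_lt : forall fuel n, Forall (fun d => d < 10) (digits_aux fuel n).
Proof.
  induction fuel as [|fu IH]; intros n; [constructor|].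
  change (digits_aux (S fu) n) with (if Nat.ltb n 10 then [n] else (n mod 10) :: digits_aux fu (n / 10)).
  destruct (Nat.ltb_spec n 10); constructor; auto. apply Nat.mod_upper_bound; lia.
Qed.

Fixpoint ext (l : list nat) : list (list nat) * list nat :=
  match l with
  | [] => ([], [])
  | x :: t =>
    let (bs, lo) := ext t in
    if Nat.leb x 1 then ([x] :: bs, lo)
    else if in_dec Nat.eq_dec x lo then ([x; x] :: bs, remove Nat.eq_dec x lo)
    else (bs, x :: lo)
  end.

Definition good (B : list nat) : Prop := B = [0] \/ B = [1] \/ exists d, d <> 0 /\ B = [d; d].

Lemma perm_remove : forall (x : nat) lo, NoDup lo -> In x lo -> Permutation lo (x :: remove Nat.eq_dec x lo).
Proof.
  induction lo as [|y lo IH]; intros ND Hin; [destruct Hin|].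
  apply NoDup_cons_iff in ND as [Hy ND]. simpl.
  destruct (Nat.eq_dec x y) as [E|E].
  - subst. rewrite notin_remove; auto.
  - destruct Hin as [Hin|Hin]; [congruence|].
    eapply perm_trans; [apply perm_skip, IH; eauto|]. apply perm_swap.
Qed.

Lemma ext_spec : forall l, Forall (fun d => d < 10) l ->
  Permutation l (concat (fst (ext l)) ++ snd (ext l)) /\ Forall good (fst (ext l)) /\
  NoDup (snd (ext l)) /\ Forall (fun d => 2 <= d < 10) (snd (ext l)) /\
  length (concat (fst (ext l))) <= 2 * length (fst (ext l)).
Proof.
  induction l as [|x t IH]; intros HF.
  - simpl. repeat split; auto; constructor.
  - apply Forall_cons_iff in HF as [Hx HF]. specialize (IH HF).
    simpl. destruct (ext t) as [bs lo]. simpl in IH. destruct IH as (HP & HG & HN & HL & HC).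
    destruct (Nat.leb_spec x 1).
    + simpl. repeat split; auto.
      constructor; auto. unfold good. assert (x = 0 \/ x = 1) as [->| ->] by lia; auto.
      simpl. lia.
    + destruct (in_dec Nat.eq_dec x lo) as [Hin|Hin].
      * pose proof (perm_remove x lo HN Hin) as HR.
        assert (HN' : NoDup (x :: remove Nat.eq_dec x lo)) by (eapply Permutation_NoDup; eauto).
        simpl. repeat split.
        -- apply perm_skip. eapply perm_trans; [apply HP|].
           eapply perm_trans; [apply Permutation_app_head, HR|].
           apply Permutation_sym, Permutation_middle.
        -- constructor; auto. right; right. exists x; split; auto; lia.
        -- apply NoDup_cons_iff in HN'; tauto.
        -- apply Forall_forall. intros d Hd. rewrite Forall_forall in HL. apply HL.
           eapply Permutation_in; [apply Permutation_sym, HR|]. right; auto.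
        -- simpl. lia.
      * simpl. split; [|split; [|split; [|split]]]; auto.
        -- eapply perm_trans; [apply perm_skip, HP|]. apply Permutation_middle.
        -- constructor; auto.
Qed.

Lemma lo_len : forall lo, NoDup lo -> Forall (fun d => 2 <= d < 10) lo -> length lo <= 8.
Proof.
  intros lo HN HF. change 8 with (length (seq 2 8)). apply NoDup_incl_length; auto.
  intros d Hd. rewrite Forall_forall in HF. apply in_seq. specialize (HF d Hd). lia.
Qed.
Import ListNotations.
Open Scope nat_scope.

Definition g (r : nat) : nat :=
  match r with
  | 0 | 1 => 0 | 2 => 1 | 3 | 4 => 2 | 5 => 3 | 6 | 7 => 4 | 8 => 5
  | 9 | 10 => 6 | 11 => 7 | _ => 8 end.

Definition J (n : nat) : nat := 9 * (n / 13) + g (n mod 13).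

Lemma g_ok : forall r, r < 13 -> g r <= r /\ 2 ^ g r <= 5 ^ (r - g r).
Proof.
  intros r Hr. do 13 (destruct r as [|r]; [simpl; lia|]). lia.
Qed.

Lemma ten_le : forall a b, 2 ^ a <= 5 ^ b -> 10 ^ a <= 5 ^ (a + b).
Proof.
  intros. change 10 with (2 * 5). rewrite Nat.pow_mul_l, Nat.pow_add_r.
  rewrite (Nat.mul_comm (5^a)). apply Nat.mul_le_mono; lia.
Qed.

Lemma J_ok : forall n, 10 ^ J n <= 5 ^ n.
Proof.
  intros n. pose proof (Nat.div_mod n 13 ltac:(lia)) as Hd.
  pose proof (Nat.mod_upper_bound n 13 ltac:(lia)) as Hm.
  set (q := n / 13) in *. set (r := n mod 13) in *.
  destruct (g_ok r Hm) as [H1 H2].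
  replace n with (J n + (4 * q + (r - g r))) at 2 by (unfold J; fold q r; lia).
  apply ten_le. unfold J; fold q r.
  rewrite !Nat.pow_add_r, !Nat.pow_mul_r. apply Nat.mul_le_mono; auto.
  apply Nat.pow_le_mono_l. simpl. lia.
Qed.

Lemma fb_irr : forall f1 f2 n, n <= f1 -> n <= f2 -> fb f1 n = fb f2 n.
Proof.
  induction f1 as [|f1 IH]; intros f2 n H1 H2.
  - assert (n = 0) by lia. subst. destruct f2; reflexivity.
  - destruct f2 as [|f2]; [assert (n = 0) by lia; subst; reflexivity|].
    change (fb (S f1) n) with (if Nat.leb n 3 then n else (fb f1 (n/2) + 2 + n mod 2)).
    change (fb (S f2) n) with (if Nat.leb n 3 then n else (fb f2 (n/2) + 2 + n mod 2)).
    destruct (Nat.leb_spec n 3); auto.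
    destruct (div2_lt n) as [Hl _]; [lia|]. rewrite (IH f2); lia.
Qed.

Definition F n := fb n n.

Lemma F_rec : forall n, 4 <= n -> F n = F (n/2) + 2 + n mod 2.
Proof.
  intros n Hn. unfold F. destruct n as [|m]; [lia|].
  change (fb (S m) (S m)) with (if Nat.leb (S m) 3 then S m else (fb m (S m/2) + 2 + S m mod 2)).
  destruct (Nat.leb_spec (S m) 3); [lia|].
  destruct (div2_lt (S m)) as [Hl _]; [lia|]. rewrite (fb_irr m (S m / 2)); lia.
Qed.

Definition chk1 (n : nat) : bool := Nat.leb (2 * F n + 7) (J n).
Definition chk2 (n : nat) : bool := Nat.leb (F n) (n / 8).

Lemma chk1_ok : forallb chk1 (seq 53 347) = true.
Proof. vm_compute. reflexivity. Qed.
Lemma chk2_ok : forallb chk2 (seq 200 200) = true.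
Proof. vm_compute. reflexivity. Qed.

Lemma F_big : forall n, 200 <= n -> F n <= n / 8.
Proof.
  intros n. induction n as [n IH] using lt_wf_ind. intros Hn.
  destruct (Nat.lt_ge_cases n 400).
  - pose proof chk2_ok as C. rewrite forallb_forall in C.
    specialize (C n ltac:(apply in_seq; lia)). unfold chk2 in C. apply Nat.leb_le in C. exact C.
  - rewrite F_rec by lia.
    pose proof (Nat.div_mod n 2 ltac:(lia)). pose proof (Nat.mod_upper_bound n 2 ltac:(lia)).
    assert (200 <= n / 2) by (apply Nat.div_le_lower_bound; lia).
    specialize (IH (n/2) ltac:(lia) H2).
    pose proof (Nat.div_mod (n/2) 8 ltac:(lia)). pose proof (Nat.mod_upper_bound (n/2) 8 ltac:(lia)).
    pose proof (Nat.div_mod n 8 ltac:(lia)). pose proof (Nat.mod_upper_bound n 8 ltac:(lia)).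
    lia.
Qed.

Lemma FJ : forall n, 53 <= n -> 2 * F n + 7 <= J n.
Proof.
  intros n Hn. destruct (Nat.lt_ge_cases n 400).
  - pose proof chk1_ok as C. rewrite forallb_forall in C.
    specialize (C n ltac:(apply in_seq; lia)). unfold chk1 in C. apply Nat.leb_le in C. exact C.
  - pose proof (F_big n ltac:(lia)). unfold J.
    pose proof (Nat.div_mod n 8 ltac:(lia)). pose proof (Nat.mod_upper_bound n 8 ltac:(lia)).
    pose proof (Nat.div_mod n 13 ltac:(lia)). pose proof (Nat.mod_upper_bound n 13 ltac:(lia)).
    lia.
Qed.

Lemma F_pos : forall n, 1 <= n -> 1 <= F n.
Proof.
  intros n Hn. destruct (Nat.le_gt_cases n 3).
  - unfold F. destruct n as [|m]; [lia|].
    change (fb (S m) (S m)) with (if Nat.leb (S m) 3 then S m else (fb m (S m/2) + 2 + S m mod 2)).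
    destruct (Nat.leb_spec (S m) 3); lia.
  - rewrite F_rec; lia.
Qed.
Import ListNotations.
Open Scope nat_scope.

Lemma good_V : forall B, good B -> V (map INR B) 1.
Proof.
  intros B [->|[->|[d [Hd ->]]]]; simpl.
  - change 1%R with (INR (fact 0)). apply V_fact. constructor.
  - constructor.
  - assert (INR d <> 0%R) by (apply not_0_INR; auto).
    replace 1%R with (INR d / INR d)%R by (field; auto).
    apply (V_bin [INR d] [INR d] (INR d) (INR d)); [constructor|constructor|].
    unfold Defs.combine. right; right; right; right; left. split; auto.
Qed.

Lemma pow5_mod : forall n, 1 <= n -> (5 ^ n) mod 10 = 5.
Proof.
  induction n as [|n IH]; intros Hn; [lia|].
  destruct n as [|n]; [reflexivity|].
  specialize (IH ltac:(lia)).
  pose proof (Nat.div_mod (5 ^ S n) 10 ltac:(lia)) as Hd.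
  rewrite Nat.pow_succ_r'. rewrite Hd, IH.
  replace (5 * (10 * (5 ^ S n / 10) + 5)) with (5 + (5 * (5 ^ S n / 10) + 2) * 10) by lia.
  rewrite Nat.Div0.mod_add. reflexivity.
Qed.

Theorem lemma7p2 : forall n : nat, (53 <= n)%nat -> selfcondensable (5 ^ n).
Proof.
  intros n Hn. unfold selfcondensable.
  pose proof (Nat.pow_nonzero 5 n ltac:(lia)) as Hnz.
  split; [lia|].
  pose proof (J_ok n) as HJ. pose proof (FJ n Hn) as HFJ.
  assert (H10 : 10 <= 5 ^ n).
  { assert (10 ^ 1 <= 10 ^ J n) by (apply Nat.pow_le_mono_r; lia). rewrite Nat.pow_1_r in H. lia. }
  pose proof (dig_len (5^n) (5^n) (J n) (le_n _) HJ) as HL.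
  pose proof (pow5_mod n ltac:(lia)) as HM.
  unfold digits in *.
  remember (5 ^ n) as N eqn:HNe.
  destruct N as [|M]; [lia|].
  change (digits_aux (S M) (S M)) with (if Nat.ltb (S M) 10 then [S M] else (S M mod 10) :: digits_aux M (S M / 10)) in *.
  destruct (Nat.ltb_spec (S M) 10); [lia|].
  rewrite HM in *. set (t := digits_aux M (S M / 10)) in *.
  pose proof (dig_lt M (S M / 10)) as Hlt. fold t in Hlt.
  destruct (ext_spec t Hlt) as (HP & HG & HN & HLo & HC).
  destruct (ext t) as [bs lo]. cbn [fst snd] in *.
  pose proof (lo_len lo HN HLo) as Hlo8.
  pose proof (Permutation_length HP) as HPl. rewrite length_app in HPl.
  cbn [length] in HL.
  assert (HB : F n <= length bs) by lia.
  pose proof (F_pos n ltac:(lia)).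
  destruct bs as [|b0 bs]; [simpl in HB; lia|].
  apply Forall_cons_iff in HG as [Hg0 HG].
  set (B0 := map INR b0 ++ map INR lo).
  assert (HB0 : V B0 1) by (apply V_absorb, good_V; auto).
  assert (HO : V (concat (B0 :: map (map INR) bs)) (INR n)).
  { apply ones_ge; [lia| |].
    - constructor; auto. rewrite Forall_map. eapply Forall_impl; [|exact HG].
      intros; apply good_V; auto.
    - cbn [length]. rewrite length_map. cbn [length] in HB. exact HB. }
  apply V_perm with (L := [INR 5] ++ concat (B0 :: map (map INR) bs)).
  - assert (E : INR (S M) = Rpower (INR 5) (INR n)).
    { rewrite Rpower_pow by (simpl; lra). rewrite <- pow_INR, HNe. reflexivity. }
    rewrite E. apply V_bin with (a := INR 5) (b := INR n); [constructor|exact HO|].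
    unfold Defs.combine. right; right; right; right; right; right; left.
    left. split; auto. simpl; lra.
  - simpl. apply perm_skip. subst B0.
    apply Permutation_map with (f := INR) in HP.
    eapply perm_trans; [|apply Permutation_sym, HP].
    rewrite !map_app, concat_map. simpl. rewrite <- !app_assoc.
    apply Permutation_app_head. apply Permutation_app_comm.
Qed.
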